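(* For every ranking profile $R$ over $m\geq 2$ candidates, every ranking $\rhd$ chosen by the Chamberlin-Courant SWF satisfies unanimous justified representation (uJR) for $R$, i.e., $u(\succ,\rhd)\geq 1$ for every $\succ\in\mathcal{R}$ with $R(\succ)\geq 1/\binom{m}{2}$.
   Context: Let $C=\{x_1,\dots,x_m\}$ be a set of $m$ candidates. A ranking is a strict linear order over $C$; $\mathcal{R}$ denotes the set of all rankings over $C$. A ranking profile is a function $R:\mathcal{R}\to[0,1]$ with $\sum_{\succ\in\mathcal{R}}R(\succ)=1$. For rankings $\succ,\rhd$, $u(\succ,\rhd)=|\{(x,y)\in C^2: x\succ y \text{ and } x\rhd y\}|$. Let $s:\mathbb{N}_0\to\mathbb{R}$ with $s(0)=0$ and $s(k)=1$ for $k>0$. The Chamberlin-Courant SWF chooses a ranking $\rhd\in\mathcal{R}$ maximizing $\sum_{\succ\in\mathcal{R}}R(\succ)\,s(u(\succ,\rhd))$ (ties broken arbitrarily). *)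

(* Defs.v *)
From mathcomp Require Import all_boot all_order all_algebra all_fingroup.
From mathcomp Require Import reals.
Set Implicit Arguments. Unset Strict Implicit. Unset Printing Implicit Defensive.
Import Order.TTheory GRing.Theory Num.Theory.
Local Open Scope ring_scope.

(* A ranking (strict linear order on 'I_m) is encoded by a
   permutation [r : {perm 'I_m}] giving each candidate its position:
   x is ranked above y iff r x < r y.  This is a bijection between
   {perm 'I_m} and the set of strict linear orders on 'I_m. *)
Definition ranking (m : nat) := {perm 'I_m}.

Definition prefers (m : nat) (r : ranking m) (x y : 'I_m) : bool :=
  (val (r x) < val (r y))%N.

(* u(succ, rhd) = |{(x,y) : x succ y and x rhd y}| *)
Definition agree (m : nat) (r1 r2 : ranking m) : nat :=
  #|[set p : 'I_m * 'I_m | prefers r1 p.1 p.2 && prefers r2 p.1 p.2]|.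

Definition is_profile (R : realType) (m : nat) (P : {ffun ranking m -> R}) : Prop :=
  (forall r, 0 <= P r <= 1) /\ \sum_(r : ranking m) P r = 1.

Definition s_CC (R : realType) (k : nat) : R := if k == 0%N then 0 else 1.

Definition cc_score (R : realType) (m : nat) (P : {ffun ranking m -> R})
  (t : ranking m) : R :=
  \sum_(r : ranking m) P r * s_CC R (agree r t).

Definition cc_chosen (R : realType) (m : nat) (P : {ffun ranking m -> R})
  (t : ranking m) : Prop :=
  forall t' : ranking m, cc_score P t' <= cc_score P t.

Definition uJR (R : realType) (m : nat) (P : {ffun ranking m -> R})
  (t : ranking m) : Prop :=
  forall r : ranking m, (('C(m, 2))%:R)^-1 <= P r -> (1 <= agree r t)%N.

(* Main.v *)
Require Import Defs.
From mathcomp Require Import all_boot all_order all_algebra all_fingroup.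
From mathcomp Require Import reals.
Import Order.TTheory GRing.Theory Num.Theory.
From mathcomp Require Import zify.

Lemma card_lt_ord m k : (k <= m)%N -> #|[set i : 'I_m | (val i < k)%N]| = k.
Proof.
move=> km.
have -> : [set i : 'I_m | (val i < k)%N] = widen_ord km @: [set: 'I_k].
  apply/setP=> i; rewrite inE; apply/idP/imsetP.
  - move=> ik; exists (Ordinal ik); first by rewrite inE.
    by apply: val_inj.
  - by case=> j _ ->; rewrite /= ltn_ord.
rewrite card_imset ?cardsT ?card_ord //.
by move=> a b /(congr1 val) /= /val_inj.
Qed.

Lemma pos_count m (a : ranking m) x : #|[set y | prefers a y x]| = val (a x).
Proof.
have -> : [set y | prefers a y x] = a @^-1: [set i : 'I_m | (val i < val (a x))%N].
  by apply/setP=> y; rewrite !inE.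
by rewrite card_preimset ?card_lt_ord 1?ltnW ?ltn_ord //; apply: perm_inj.
Qed.

Lemma agree0P m (a c : ranking m) x y : agree a c = 0%N -> x != y ->
  prefers a x y = prefers c y x.
Proof.
move=> h nxy.
have H : forall u v, prefers a u v -> prefers c u v -> False.
  move=> u v h1 h2; move: h; rewrite /agree => /eqP; rewrite cards_eq0 => /eqP E.
  have : (u, v) \in [set p : 'I_m * 'I_m | prefers a p.1 p.2 && prefers c p.1 p.2].
    by rewrite inE /= h1 h2.
  by rewrite E inE.
have na : val (a x) != val (a y) by rewrite val_eqE (inj_eq perm_inj).
have nc : val (c x) != val (c y) by rewrite val_eqE (inj_eq perm_inj).
rewrite /prefers.
case: (ltngtP (val (a x)) (val (a y))) na => // axy _;
case: (ltngtP (val (c x)) (val (c y))) nc => // cxy _.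
- by exfalso; apply: (H x y); rewrite /prefers.
- by exfalso; apply: (H y x); rewrite /prefers.
Qed.

Lemma agree0_uniq m (a b c : ranking m) : agree a c = 0%N -> agree b c = 0%N -> a = b.
Proof.
move=> ha hb; apply/permP=> x; apply: val_inj.
rewrite -!pos_count; apply: eq_card => y; rewrite !inE.
case: (eqVneq y x) => [->|nyx]; first by rewrite /prefers !ltnn.
by rewrite (@agree0P _ _ _ _ _ ha nyx) (@agree0P _ _ _ _ _ hb nyx).
Qed.

Lemma rev_exists m (a : ranking m) : exists c : ranking m, agree a c = 0%N.
Proof.
have inj : injective (fun x => rev_ord (a x)).
  by move=> x y /rev_ord_inj /perm_inj.
exists (perm inj); apply/eqP; rewrite cards_eq0; apply/eqP/setP=> [[x y]].
rewrite !inE /prefers /= !permE /=.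
apply/negbTE; apply/negP=> /andP[h1 h2].
have := ltn_ord (a x); have := ltn_ord (a y); lia.
Qed.

Local Open Scope ring_scope.

Lemma score_le (R : realType) m (P : {ffun ranking m -> R}) t r :
  is_profile P -> agree r t = 0%N -> cc_score P t <= 1 - P r.
Proof.
case=> hP hs hr; rewrite /cc_score -hs. rewrite [X in X <= _](bigD1 r) //= [X in _ <= X - _](bigD1 r) //=. rewrite hr /s_CC eqxx mulr0 add0r.
rewrite addrAC subrr add0r; apply: ler_sum => i _; rewrite /s_CC.
have := hP i => /andP[h0 _].
by case: eqP => _; rewrite ?mulr0 ?mulr1.
Qed.

Lemma score_ge (R : realType) m (P : {ffun ranking m -> R}) t r :
  is_profile P -> agree r t = 0%N -> 1 - P r <= cc_score P t.
Proof.
case=> hP hs hr; rewrite /cc_score -hs [X in X - _ <= _](bigD1 r) //= [X in _ <= X](bigD1 r) //=.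
rewrite addrAC subrr add0r.
have := hP r => /andP[h0 _].
rewrite -[X in X <= _]add0r; apply: lerD; first by apply: mulr_ge0 => //; rewrite /s_CC; case: eqP.
apply: ler_sum => i ir; rewrite /s_CC.
case: eqP => h; last by rewrite mulr1.
by move: ir; rewrite (@agree0_uniq _ _ _ _ h hr) eqxx.
Qed.

Theorem mainTheorem2 (R : realType) (m : nat) (P : {ffun ranking m -> R})
  (t : ranking m) :
  (2 <= m)%N -> is_profile P -> cc_chosen P t -> uJR P t.
Proof.
move=> m2 hprof hcc r hr; rewrite lt0n; apply/negP => /eqP h0.
have minP : forall r', P r <= P r'.
  move=> r'; have [t' ht'] := rev_exists _ r'.
  have := hcc t'; have := @score_le _ _ _ _ _ hprof h0; have := @score_ge _ _ _ _ _ hprof ht'.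
  move=> a b c; have := le_trans a (le_trans c b).
  by rewrite lerD2l lerN2.
have cpos : (0 < 'C(m, 2))%N by rewrite bin_gt0.
have fact2 : ('C(m, 2) * 2 <= m`!)%N.
  have := bin_ffact m 2; rewrite (_ : 2`! = 2)// => ->.
  by rewrite -(ffact_fact m2) leq_pmulr // fact_gt0.
case: hprof => hP hs.
have : P r *+ #|{perm 'I_m}| <= 1.
  rewrite -hs -sumr_const; apply: ler_sum => i _.
  by rewrite minP.
rewrite card_Sn -mulr_natl; apply/negP; rewrite -ltNge.
have cR : 0 < ('C(m, 2))%:R :> R by rewrite ltr0n.
apply: (@lt_le_trans _ _ (m`!%:R * ('C(m, 2))%:R^-1)).
  rewrite ltr_pdivlMr // mul1r ltr_nat.
  apply: (leq_trans _ fact2); rewrite -{1}[X in (X < _)%N]muln1 ltn_pmul2l //.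
by apply: ler_wpM2l => //; rewrite ler0n.
Qed.
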